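(* For every $(\varepsilon,\delta)\in\mathbb{R}^2$, the transformation $\sigma_{(\varepsilon,\delta)}$ of the set of overmarked boxes commutes with the involution $j$, and therefore induces a transformation of the set of marked boxes.
   Context: Let $V$ be a 3-dimensional real vector space. An overmarked box is $\Theta=((p,q,r,s;t,b),(P,Q,R,S;T,B))$ with $p,\dots,b\in\mathbf{P}(V)$ and lines $P,\dots,B$ of $\mathbf{P}(V)$ such that $P=ts$, $Q=tr$, $R=bq$, $S=bp$, $T=pq$, $B=rs$ (here $xy$ is the line through points $x,y$) and $T\cap B\notin\{p,q,r,s,t,b\}$. A $\Theta$-basis is a basis of $V$, unique up to scaling, in which $p=[-1:1:0]$, $q=[1:1:0]$, $r=[1:0:1]$, $s=[-1:0:1]$. The involution $j$ maps $\Theta$ to $((q,p,s,r;t,b),(Q,P,S,R;T,B))$; marked boxes are $j$-orbits. For $(\varepsilon,\delta)\in\mathbb{R}^2$ let $$\Sigma_{(\varepsilon,\delta)}=\begin{pmatrix}1&0&0\\0&e^{-\delta}\cosh\varepsilon&-\sinh\varepsilon\\0&-\sinh\varepsilon&e^{\delta}\cosh\varepsilon\end{pmatrix},$$ and let $\sigma_{(\varepsilon,\delta)}(\Theta)$ be the image of $\Theta$ (points and lines) under the projective transformation whose matrix in a $\Theta$-basis is $\Sigma_{(\varepsilon,\delta)}$. *)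

(* Defs.v *)
From HB Require Import structures.
From mathcomp Require Import all_boot all_order all_algebra.
From mathcomp Require Import Rstruct.
From Stdlib Require Import Rdefinitions Rfunctions Rtrigo_def.
Set Implicit Arguments. Unset Strict Implicit. Unset Printing Implicit Defensive.
Import Order.TTheory GRing.Theory Num.Theory.
Local Open Scope ring_scope.

(* A point of P(V) is represented by a nonzero row
   vector x : 'rV_3, a line of P(V) (a 2-plane of V) by a nonzero column
   covector L : 'cV_3; the point x lies on L iff x *m L = 0. *)
Definition pt := 'rV[R]_3.
Definition ln := 'cV[R]_3.

Definition peq m n (u v : 'M[R]_(m, n)) : Prop :=
  exists k : R, k != 0 /\ v = k *: u.

Definition on_line (x : pt) (L : ln) : Prop := x *m L = 0.

Definition is_join (x y : pt) (L : ln) : Prop :=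
  ~ peq x y /\ on_line x L /\ on_line y L.

Record obox := OBox {
  bp : pt; bq : pt; br : pt; bs : pt; bt : pt; bb : pt;
  lP : ln; lQ : ln; lR : ln; lS : ln; lT : ln; lB : ln }.

Definition overmarked (X : obox) : Prop :=
  (bp X != 0 /\ bq X != 0 /\ br X != 0 /\ bs X != 0 /\ bt X != 0 /\ bb X != 0) /\
  (lP X != 0 /\ lQ X != 0 /\ lR X != 0 /\ lS X != 0 /\ lT X != 0 /\ lB X != 0) /\
  (is_join (bt X) (bs X) (lP X) /\ is_join (bt X) (br X) (lQ X) /\
   is_join (bb X) (bq X) (lR X) /\ is_join (bb X) (bp X) (lS X) /\
   is_join (bp X) (bq X) (lT X) /\ is_join (br X) (bs X) (lB X)) /\
  ~ peq (lT X) (lB X) /\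
  exists z : pt, [/\ z != 0, on_line z (lT X), on_line z (lB X) &
    ~ peq z (bp X) /\ ~ peq z (bq X) /\ ~ peq z (br X) /\ ~ peq z (bs X) /\
    ~ peq z (bt X) /\ ~ peq z (bb X)].

Definition jbox (X : obox) : obox :=
  OBox (bq X) (bp X) (bs X) (br X) (bt X) (bb X)
       (lQ X) (lP X) (lS X) (lR X) (lT X) (lB X).

Definition box_peq (X Y : obox) : Prop :=
  (peq (bp X) (bp Y) /\ peq (bq X) (bq Y) /\ peq (br X) (br Y) /\
   peq (bs X) (bs Y) /\ peq (bt X) (bt Y) /\ peq (bb X) (bb Y)) /\
  (peq (lP X) (lP Y) /\ peq (lQ X) (lQ Y) /\ peq (lR X) (lR Y) /\
   peq (lS X) (lS Y) /\ peq (lT X) (lT Y) /\ peq (lB X) (lB Y)).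

(* A basis of V is an invertible matrix M whose rows e_1, e_2, e_3 are the
   basis vectors; coordinates c : 'rV_3 correspond to the vector c *m M. *)
Definition crd (a b c : R) : 'rV[R]_3 := \row_(i < 3) [:: a; b; c]`_i.

Definition theta_basis (X : obox) (M : 'M[R]_3) : Prop :=
  M \in unitmx /\
  peq (crd (-1) 1 0 *m M) (bp X) /\ peq (crd 1 1 0 *m M) (bq X) /\
  peq (crd 1 0 1 *m M) (br X) /\ peq (crd (-1) 0 1 *m M) (bs X).

Definition Sigma (eps del : R) : 'M[R]_3 :=
  \matrix_(i < 3, j < 3) nth 0 (nth [::]
    [:: [:: 1; 0; 0];
        [:: 0; exp (- del) * cosh eps; - sinh eps];
        [:: 0; - sinh eps; exp del * cosh eps]] i) j.

(* The projective transformation whose matrix (acting on column coordinate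
   vectors) in the basis M is A: on vectors v |-> v *m (M^-1 A^T M). *)
Definition ptrans (M A : 'M[R]_3) : 'M[R]_3 := invmx M *m A^T *m M.

(* image of a box under the transformation g (points v |-> v g, lines
   L |-> g^-1 L, so that incidence is preserved) *)
Definition box_image (g : 'M[R]_3) (X : obox) : obox :=
  OBox (bp X *m g) (bq X *m g) (br X *m g) (bs X *m g) (bt X *m g) (bb X *m g)
       (invmx g *m lP X) (invmx g *m lQ X) (invmx g *m lR X)
       (invmx g *m lS X) (invmx g *m lT X) (invmx g *m lB X).

(* sigma_(eps,delta)(X) computed with the Theta-basis M of X *)
Definition sigma (eps del : R) (M : 'M[R]_3) (X : obox) : obox :=
  box_image (ptrans M (Sigma eps del)) X.

(* Main.v *)
From Stdlib Require Import Reals.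
Require Import Defs.
From HB Require Import structures.
From mathcomp Require Import all_boot all_order all_algebra.
From mathcomp Require Import Rstruct.
From mathcomp Require Import lra.
From Stdlib Require Import Rdefinitions Rfunctions Rtrigo_def.
Import Order.TTheory GRing.Theory Num.Theory.
Local Open Scope ring_scope.

Section G.
Variable g : 'M[R]_3.
Hypothesis gu : g \in unitmx.

Lemma pt_nz (x : pt) : x != 0 -> x *m g != 0.
Proof.
move=> hx; apply/eqP => h; move/eqP: hx; apply.
by rewrite -(mulmxK gu x) h mul0mx.
Qed.

Lemma ln_nz (L : ln) : L != 0 -> invmx g *m L != 0.
Proof.
move=> hx; apply/eqP => h; move/eqP: hx; apply.
by rewrite -(mulKVmx gu L) h mulmx0.
Qed.

Lemma pt_npeq (x y : pt) : ~ peq x y -> ~ peq (x *m g) (y *m g).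
Proof.
move=> h [k [k0 e]]; apply: h; exists k; split => //.
by rewrite -(mulmxK gu y) e -scalemxAl mulmxK.
Qed.

Lemma ln_npeq (x y : ln) : ~ peq x y -> ~ peq (invmx g *m x) (invmx g *m y).
Proof.
move=> h [k [k0 e]]; apply: h; exists k; split => //.
by rewrite -(mulKVmx gu y) e scalemxAr mulKVmx.
Qed.

Lemma on_img (x : pt) (L : ln) : on_line x L -> on_line (x *m g) (invmx g *m L).
Proof. by rewrite /on_line mulmxA mulmxK. Qed.

Lemma join_img x y L : is_join x y L -> is_join (x *m g) (y *m g) (invmx g *m L).
Proof. by move=> [h1 [h2 h3]]; split; [apply: pt_npeq|split; apply: on_img]. Qed.

Lemma overmarked_img X : overmarked X -> overmarked (box_image g X).
Proof.
case: X => p q r s t b P Q R' S T B /=.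
rewrite /overmarked /=.
move=> [[?[?[?[?[??]]]]] [[?[?[?[?[??]]]]] [[?[?[?[?[??]]]]] [hTB [z [z0 zT zB [?[?[?[?[??]]]]]]]]]]].
split; first by do !split; apply: pt_nz.
split; first by do !split; apply: ln_nz.
split; first by split; [apply: join_img|split; [apply: join_img|split; [apply: join_img|split; [apply: join_img|split; apply: join_img]]]].
split; first by apply: ln_npeq.
exists (z *m g); split; [exact: pt_nz|exact: on_img|exact: on_img|].
by split; [apply: pt_npeq|split; [apply: pt_npeq|split; [apply: pt_npeq|split; [apply: pt_npeq|split; [apply: pt_npeq|apply: pt_npeq]]]]].
Qed.
End G.
Lemma ch_shR e : (cosh e * cosh e - sinh e * sinh e = 1)%R.
Proof.
unfold cosh, sinh.
have h : (exp e * exp (- e) = 1)%R by rewrite -exp_plus Rplus_opp_r exp_0.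
rewrite -h; field.
Qed.
Lemma ch_sh e : cosh e * cosh e - sinh e * sinh e = 1.
Proof. exact: ch_shR. Qed.
Lemma exp_inv d : exp d * exp (- d) = 1.
Proof. rewrite -RmultE -exp_plus. by rewrite Rplus_opp_r exp_0. Qed.

Definition Sinv (eps del : R) : 'M[R]_3 :=
  \matrix_(i < 3, j < 3) nth 0 (nth [::]
    [:: [:: 1; 0; 0];
        [:: 0; exp del * cosh eps; sinh eps];
        [:: 0; sinh eps; exp (- del) * cosh eps]] i) j.

Lemma Sigma_unit e d : Sigma e d \in unitmx.
Proof.
have [h _] : Sigma e d \in unitmx /\ Sinv e d \in unitmx.
  apply: mulmx1_unit; apply/matrixP => i j.
  have h1 := ch_sh e; have h2 := exp_inv d.
  rewrite !mxE !big_ord_recl big_ord0 !mxE /=.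
  by case: i => [[|[|[|i]]] Hi] //=; case: j => [[|[|[|j]]] Hj] //=; nra.
done.
Qed.
Definition Dm : 'M[R]_3 :=
  \matrix_(i < 3, j < 3) nth 0 (nth [::]
    [:: [:: -1; 0; 0]; [:: 0; 1; 0]; [:: 0; 0; 1]] i) j.

Lemma D_comm e d : Dm *m (Sigma e d)^T = (Sigma e d)^T *m Dm.
Proof.
apply/matrixP => i j; rewrite !mxE !big_ord_recl !big_ord0 !mxE /=.
by case: i => [[|[|[|i]]] Hi] //=; case: j => [[|[|[|j]]] Hj] //=; lra.
Qed.

Lemma comb (M M' : 'M[R]_3) (u v y : 'rV[R]_3) : M \in unitmx ->
  peq (u *m M') y -> peq (v *m M) y -> exists c, u *m (M' *m invmx M) = c *: v.
Proof.
move=> Mu [k1 [k10 e1]] [k2 [k20 e2]].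
exists (k2 / k1).
have : k1 *: (u *m M') = k2 *: (v *m M) by rewrite -e1 -e2.
move/(congr1 (fun A => k1^-1 *: A *m invmx M)).
rewrite !scalerA mulVf // scale1r mulmxA => ->.
by rewrite -scalemxAl mulmxK // mulrC.
Qed.

Notation o0 := (ord0 : 'I_3).
Notation o1 := (lift ord0 ord0 : 'I_3).
Notation o2 := (lift ord0 (lift ord0 ord0) : 'I_3).

Lemma row_eqs (a b c a' b' c' k : R) (N : 'M[R]_3) :
  crd a b c *m N = k *: crd a' b' c' ->
  [/\ a * N o0 o0 + b * N o1 o0 + c * N o2 o0 = k * a',
      a * N o0 o1 + b * N o1 o1 + c * N o2 o1 = k * b' &
      a * N o0 o2 + b * N o1 o2 + c * N o2 o2 = k * c'].
Proof.
move=> E.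
have F (j : 'I_3) := congr1 (fun A : 'rV[R]_3 => A 0 j) E.
move: (F o0) (F o1) (F o2); rewrite !mxE !big_ord_recl !big_ord0 !mxE /=.
move=> h0 h1 h2. rewrite !addr0 !addrA in h0 h1 h2. by split; [exact h0|exact h1|exact h2].
Qed.

Lemma IZR0 : IZR Z0 = 0 :> R. Proof. by []. Qed.
Lemma IZR1 : IZR (Zpos xH) = 1 :> R. Proof. by []. Qed.
Lemma IZRm1 : IZR (Zneg xH) = -1 :> R. Proof. by []. Qed.

Lemma N_eq (N : 'M[R]_3) c1 c2 c3 c4 :
  crd (-1) 1 0 *m N = c1 *: crd 1 1 0 ->
  crd 1 1 0 *m N = c2 *: crd (-1) 1 0 ->
  crd 1 0 1 *m N = c3 *: crd (-1) 0 1 ->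
  crd (-1) 0 1 *m N = c4 *: crd 1 0 1 ->
  N = c1 *: Dm.
Proof.
move=> /row_eqs [a1 a2 a3] /row_eqs [b1 b2 b3] /row_eqs [d1 d2 d3] /row_eqs [e1 e2 e3].
rewrite ?IZR0 ?IZR1 ?IZRm1 in a1 a2 a3 b1 b2 b3 d1 d2 d3 e1 e2 e3.
have E0 : forall H, Ordinal (n:=3) (m:=0) H = o0 by move=> H; apply: val_inj.
have E1 : forall H, Ordinal (n:=3) (m:=1) H = o1 by move=> H; apply: val_inj.
have E2 : forall H, Ordinal (n:=3) (m:=2) H = o2 by move=> H; apply: val_inj.
apply/matrixP => i j; rewrite !mxE.
by case: i => [[|[|[|i]]] Hi] //=; case: j => [[|[|[|j]]] Hj] //=; rewrite ?E0 ?E1 ?E2; lra.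
Qed.

Lemma peq_refl m n (u : 'M[R]_(m, n)) : peq u u.
Proof. by exists 1; split; [exact: oner_neq0|rewrite scale1r]. Qed.

Theorem lemma7p1 (eps del : R) (X : obox) (M M' : 'M[R]_3) :
  overmarked X -> theta_basis X M -> theta_basis (jbox X) M' ->
  overmarked (sigma eps del M X) /\
  box_peq (sigma eps del M' (jbox X)) (jbox (sigma eps del M X)).
Proof.
move=> HX [Mu [hp [hq [hr hs]]]] [M'u [hp' [hq' [hr' hs']]]].
rewrite /= in hp' hq' hr' hs'.
have [c1 E1] := @comb M M' _ _ _ Mu hp' hq.
have [c2 E2] := @comb M M' _ _ _ Mu hq' hp.
have [c3 E3] := @comb M M' _ _ _ Mu hr' hs.
have [c4 E4] := @comb M M' _ _ _ Mu hs' hr.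
have HN := @N_eq _ _ _ _ _ E1 E2 E3 E4.
have HM' : M' = c1 *: (Dm *m M).
  by rewrite scalemxAl -HN mulmxKV.
have Hg : ptrans M' (Sigma eps del) = ptrans M (Sigma eps del).
  rewrite /ptrans -[RHS](mulKmx M'u) -!mulmxA; congr (invmx M' *m _).
  rewrite !mulmxA {1 2}HM' -!scalemxAl -scalemxAr; congr (_ *: _).
  by rewrite mulmxK // D_comm !mulmxA.
split.
  apply: overmarked_img => //.
  by rewrite /ptrans !unitmx_mul unitmx_inv unitmx_tr Mu Sigma_unit.
rewrite /sigma Hg /box_peq /=.
split.
  by do 5 (split; first exact: peq_refl); exact: peq_refl.
by do 5 (split; first exact: peq_refl); exact: peq_refl.
Qed.
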